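(* Let $s$ and $d$ be positive integers with $s\leqslant d/2$ and $d$ even. Then $$ n(d-s,d)\geqslant \sum_{i=0}^{\frac d2 -s}\binom{d-s}{i}+\sum_{k=1}^{s-1}2^k\binom{d-s}{\frac d2-s+k}+2^s\sum_{i=\frac d2}^{d-s}\binom{d-s}{i}. $$
   Context: A box in $\mathbb{R}^d$ is an axis-parallel $d$-dimensional cuboid. For a positive integer $k\leqslant d$, two boxes in $\mathbb{R}^d$ are called $k$-neighborly if their intersection is a box of dimension at least $d-k$ and at most $d-1$. $n(k,d)$ denotes the maximum size of a family of pairwise $k$-neighborly boxes in $\mathbb{R}^d$. Equivalently, $n(k,d)$ is the maximum number of strings in $\{0,1,*\}^d$ such that any two distinct ones $u,v$ satisfy $1\leqslant \mathrm{dist}(u,v)\leqslant k$, where $\mathrm{dist}(u,v)$ is the number of positions $i$ with $u_i\neq v_i$ and $u_i,v_i\in\{0,1\}$. *)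

(* Defs.v *)
From mathcomp Require Import all_boot.
Set Implicit Arguments. Unset Strict Implicit. Unset Printing Implicit Defensive.

(* A string in {0,1,*}^d : each coordinate is Some false (0), Some true (1) or None ( * ). *)
Definition word (d : nat) := {ffun 'I_d -> option bool}.

Definition dist (d : nat) (u v : word d) : nat :=
  #|[set i : 'I_d | match u i, v i with
                    | Some a, Some b => a != b
                    | _, _ => false end]|.

Definition neighborly (k d : nat) (F : {set word d}) : bool :=
  [forall u in F, forall v in F, (u != v) ==> (1 <= dist u v <= k)].

Definition n (k d : nat) : nat :=
  \max_(F : {set word d} | neighborly k F) #|F|.

(* Main.v *)
Require Import Defs.
From mathcomp Require Import all_boot.
From mathcomp Require Import zify.
Set Implicit Arguments. Unset Strict Implicit. Unset Printing Implicit Defensive.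

Lemma split_l a b (j : 'I_a) : split (lshift b j) = inl j.
Proof. exact: (unsplitK (inl _ j)). Qed.
Lemma split_r a b (j : 'I_b) : split (rshift a j) = inr j.
Proof. exact: (unsplitK (inr _ j)). Qed.

Lemma card_split a b (P : pred 'I_(a+b)) :
  #|[set i | P i]| = #|[set j : 'I_a | P (lshift b j)]| + #|[set j : 'I_b | P (rshift a j)]|.
Proof.
rewrite -!sum1_card big_split_ord; congr (_ + _); apply: eq_bigl => j; rewrite !inE //.
Qed.




Lemma card_pairs (T1 T2 : finType) (P : T1 -> T2 -> bool) :
  #|[set p : T1 * T2 | P p.1 p.2]| = \sum_(a : T1) #|[set b | P a b]|.
Proof.
rewrite -sum1_card big_mkcond /=.
transitivity (\sum_(a : T1) \sum_(b : T2) (if P a b then 1 else 0)).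
  by rewrite pair_big /=; apply: eq_bigr => p _; rewrite inE.
by apply: eq_bigr => a _; rewrite -sum1_card [RHS]big_mkcond /=; apply: eq_bigr => b _; rewrite inE.
Qed.

Lemma sum_card_sets (T : finType) (F : nat -> nat) :
  \sum_(A : {set T}) F #|A| = \sum_(i < #|T|.+1) 'C(#|T|, i) * F i.
Proof.
rewrite (partition_big (fun A : {set T} => (inord #|A| : 'I_#|T|.+1)) xpredT) //=.
apply: eq_bigr => i _.
rewrite (_ : 'C(#|T|, i) = #|[set A : {set T} | #|A| == i]|); last by rewrite card_draws.
rewrite -(sum1_card (mem [set A : {set T} | #|A| == i])) big_distrl /=.
rewrite [in RHS]big_mkcond /= [in LHS]big_mkcond /=; apply: eq_bigr => A _.
rewrite inE.
have hA : #|A| < #|T|.+1 by rewrite ltnS max_card.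
have -> : (inord #|A| == i) = (#|A| == i).
  by apply/eqP/eqP => [<-|h]; [rewrite inordK | apply: val_inj; rewrite /= inordK].
by case: eqP => [->|]; rewrite ?mul1n.
Qed.

Section Constr.
Variables s t : nat.
Local Notation N := (s + (t + t)).
Implicit Types A B : {set 'I_N}.

Definition zb A (j : 'I_s) : bool := lshift (t + t) j \in A.
Definition vv A (j : 'I_s) : nat := if zb A j then val j else (s + s).-1 - j.
Definition cc A q := #|[set j : 'I_s | vv A j < q]|.
Definition kk A := minn s (#|A| - t).
Definition th A := find (fun q => kk A <= cc A q) (iota 0 (s + s).+1).
Definition SS A := [set j : 'I_s | vv A j < th A].

Lemma vv_lt A j : vv A j < s + s.
Proof. have := ltn_ord j; rewrite /vv; case: zb => /=; lia. Qed.

Lemma vv_inj A : injective (vv A).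
Proof.
move=> i j; have := ltn_ord i; have := ltn_ord j.
rewrite /vv; case: (zb A i); case: (zb A j) => /= hj hi e; apply: val_inj => /=; lia.
Qed.

Lemma cc_top A : cc A (s + s) = s.
Proof.
rewrite /cc (_ : [set j | vv A j < s + s] = setT) ?cardsT ?card_ord //.
by apply/setP => j; rewrite !inE vv_lt.
Qed.

Lemma cc0 A : cc A 0 = 0.
Proof. by rewrite /cc (_ : [set j | vv A j < 0] = set0) ?cards0 //; apply/setP => j; rewrite !inE. Qed.

Lemma cc_step A q : cc A q.+1 <= (cc A q).+1.
Proof.
rewrite /cc.
have sub : [set j | vv A j < q.+1] \subset [set j | vv A j < q] :|: [set j | vv A j == q].
  by apply/subsetP => j; rewrite !inE ltnS leq_eqVlt orbC.
apply: (leq_trans (subset_leq_card sub)); apply: (leq_trans (leq_card_setU _ _)).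
rewrite -addn1 leq_add2l; apply/card_le1_eqP => x y; rewrite !inE => /eqP hx /eqP hy.
by apply: (@vv_inj A); rewrite hx hy.
Qed.

Lemma kk_le A : kk A <= s.
Proof. by rewrite /kk geq_minl. Qed.

Lemma th_spec A : kk A <= cc A (th A) /\ (0 < th A -> cc A (th A).-1 < kk A) /\ th A <= s + s.
Proof.
have hs : has (fun q => kk A <= cc A q) (iota 0 (s + s).+1).
  apply/hasP; exists (s + s); first by rewrite mem_iota add0n leq0n ltnSn.
  by rewrite cc_top kk_le.
have hlt : th A < (s + s).+1 by rewrite /th -[X in _ < X](size_iota 0) -has_find.
split; first by have := nth_find 0 hs; rewrite nth_iota.
split; last by [].
move=> h0; have := @before_find _ 0 (fun q => kk A <= cc A q) (iota 0 (s + s).+1) (th A).-1.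
rewrite nth_iota; last by move: hlt; rewrite /th; lia.
rewrite add0n -/(th A) => /(_ _) /negbT; rewrite -ltnNge; apply; lia.
Qed.

Lemma card_SS A : #|SS A| = kk A.
Proof.
have [h1 [h2 _]] := th_spec A.
rewrite /SS -/(cc A (th A)).
case e : (th A) => [|q]; first by move: h1; rewrite e cc0; lia.
move: h1 h2; rewrite e /= => h1 /(_ isT) h2.
have := cc_step A q; lia.
Qed.


Definition ham A B := #|[set a | (a \in A) != (a \in B)]|.

Lemma card_split_set a b (X : {set 'I_(a + b)}) :
  #|X| = #|[set j : 'I_a | lshift b j \in X]| + #|[set j : 'I_b | rshift a j \in X]|.
Proof.
rewrite -(card_split (mem X)); by apply: eq_card => i; rewrite inE.
Qed.

Lemma ham_agree A B : ham A B + #|[set a | (a \in A) == (a \in B)]| = N.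
Proof.
rewrite /ham (_ : [set a | (a \in A) == (a \in B)] = ~: [set a | (a \in A) != (a \in B)]).
  by rewrite cardsC card_ord.
by apply/setP => a; rewrite !inE negbK.
Qed.

Lemma ham_union A B : ham A B + #|A :&: B| = #|A :|: B|.
Proof.
rewrite /ham -(cardsID (A :&: B) (A :|: B)) addnC; congr (_ + _).
  apply: eq_card => a; rewrite !inE; by case: (a \in A); case: (a \in B).
apply: eq_card => a; rewrite !inE; by case: (a \in A); case: (a \in B).
Qed.

Lemma key A B : ham A B + #|SS A :&: SS B| <= N.
Proof.
have hN := ham_agree A B.
have [hA0|hA1] := posnP (kk A).
  rewrite (_ : #|SS A :&: SS B| = 0); first by lia.
  apply/eqP; rewrite -leqn0 -hA0 -card_SS; apply: subset_leq_card; exact: subsetIl.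
have [hB0|hB1] := posnP (kk B).
  rewrite (_ : #|SS A :&: SS B| = 0); first by lia.
  apply/eqP; rewrite -leqn0 -hB0 -card_SS; apply: subset_leq_card; exact: subsetIr.
have [_ [_ thA]] := th_spec A.
have [_ [_ thB]] := th_spec B.
case: (leqP (th A + th B) (s + s)) => hth.
  have sub : SS A :&: SS B \subset [set j : 'I_s | lshift (t + t) j \in [set a | (a \in A) == (a \in B)]].
    apply/subsetP => j; rewrite !inE /vv /zb.
    have := ltn_ord j.
    case: (lshift (t + t) j \in A); case: (lshift (t + t) j \in B) => //= hj /andP [h1 h2]; lia.
  have := subset_leq_card sub.
  have := card_split_set [set a | (a \in A) == (a \in B)].
  lia.
have sub : [set j : 'I_s | lshift (t + t) j \in A :|: B] \subset SS A :|: SS B.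
  apply/subsetP => j; rewrite !inE /vv /zb.
  have := ltn_ord j.
  case: (lshift (t + t) j \in A); case: (lshift (t + t) j \in B) => //= hj _;
  apply/negPn/negP; rewrite negb_or -!leqNgt => /andP [h1 h2]; lia.
have h1 := subset_leq_card sub.
have h2 := card_split_set (A :|: B).
have h3 : #|[set j : 'I_(t + t) | rshift s j \in A :|: B]| <= t + t.
  by rewrite -[X in _ <= X]card_ord max_card.
have h4 := cardsUI A B.
have h5 := ham_union A B.
have h6 := cardsUI (SS A) (SS B).
rewrite !card_SS in h6.
have h7 : kk A <= #|A| - t by rewrite /kk geq_minr.
have h8 : kk B <= #|B| - t by rewrite /kk geq_minr.
have h9 : #|A :|: B| <= N by rewrite -[X in _ <= X]card_ord max_card.
lia.
Qed.


Definition fw (p : {set 'I_N} * {set 'I_s}) : word (N + s) :=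
  [ffun i => match split i with
             | inl a => Some (a \in p.1)
             | inr j => if j \in SS p.1 then Some (j \in p.2) else None end].

Definition DD := [set p : {set 'I_N} * {set 'I_s} | p.2 \subset SS p.1].

Lemma dist_fw p q : dist (fw p) (fw q) =
  ham p.1 q.1 + #|[set j | [&& j \in SS p.1, j \in SS q.1 & (j \in p.2) != (j \in q.2)]]|.
Proof.
rewrite /dist card_split /ham; congr (_ + _); apply: eq_card => i; rewrite !inE !ffunE ?split_l ?split_r //.
rewrite /SS !inE; by case: (vv p.1 i < th p.1); case: (vv q.1 i < th q.1).
Qed.

Lemma dist_le p q : dist (fw p) (fw q) <= N.
Proof.
rewrite dist_fw; apply: leq_trans (key p.1 q.1); rewrite leq_add2l.
apply: subset_leq_card; apply/subsetP => j; rewrite !inE => /and3P [-> -> _] //.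
Qed.

Lemma dist0 p q : p \in DD -> q \in DD -> dist (fw p) (fw q) = 0 -> p = q.
Proof.
case: p => A Y; case: q => B Z; rewrite !inE /= => hY hZ.
rewrite dist_fw /= => /eqP; rewrite addn_eq0 => /andP [/eqP h1 /eqP h2].
have eAB : A = B.
  apply/setP => a; apply/eqP; apply: contraT => hne.
  have : 0 < ham A B by apply/card_gt0P; exists a; rewrite inE.
  by rewrite h1.
subst B; congr (_, _); apply/setP => j; apply/eqP; apply: contraT => hne.
have : 0 < #|[set j | [&& j \in SS A, j \in SS A & (j \in Y) != (j \in Z)]]|.
  apply/card_gt0P; exists j; rewrite !inE hne andbT andbb.
  move: hne; case hjY: (j \in Y); case hjZ: (j \in Z) => //= _.
    by have := subsetP hY j hjY; rewrite inE.
  by have := subsetP hZ j hjZ; rewrite inE.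
by rewrite h2.
Qed.

Lemma main_constr : \sum_(A : {set 'I_N}) 2 ^ kk A <= n N (N + s).
Proof.
have hinj : {in DD &, injective fw}.
  by move=> p q hp hq e; apply: dist0 => //; rewrite e /dist (_ : [set _ | _] = set0) ?cards0 //;
     apply/setP => i; rewrite !inE; case: (fw q i) => // -[].
have hnb : neighborly N (fw @: DD).
  apply/forall_inP => u /imsetP [p hp ->]; apply/forall_inP => v /imsetP [q hq ->].
  apply/implyP => hne; rewrite dist_le andbT lt0n; apply/negP => /eqP h0.
  by move/eqP: hne; apply; rewrite (dist0 hp hq h0).
apply: leq_trans (leq_bigmax_cond _ hnb).
rewrite card_in_imset // /DD (card_pairs (fun (A : {set 'I_N}) (Y : {set 'I_s}) => Y \subset SS A)).
apply: eq_leq.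
apply: eq_bigr => A _; rewrite -card_SS -card_powerset; apply: eq_card => Y.
by rewrite !inE.
Qed.

End Constr.

Lemma target_eq s t : 0 < s ->
  \sum_(0 <= i < t.+1) 'C(s + (t + t), i)
  + \sum_(1 <= k < s) 2 ^ k * 'C(s + (t + t), t + k)
  + 2 ^ s * \sum_(s + t <= i < (s + (t + t)).+1) 'C(s + (t + t), i)
  = \sum_(i < (s + (t + t)).+1) 'C(s + (t + t), i) * 2 ^ (minn s (i - t)).
Proof.
move=> s0.
rewrite -(big_mkord xpredT (fun i => 'C(s + (t + t), i) * 2 ^ (minn s (i - t)))).
rewrite [RHS](big_cat_nat (n := t.+1)) /=; [|by []|by rewrite ltnS; lia].
rewrite [X in _ = _ + X](big_cat_nat (m := t.+1) (n := s + t)) /=; [|lia|lia].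
rewrite -addnA; congr (_ + _).
  apply: eq_big_nat => i /andP [_ hi].
  by rewrite (_ : i - t = 0) ?minn0 ?muln1 //; lia.
congr (_ + _).
  rewrite -[t.+1]add1n big_addn addnK; apply: eq_big_nat => k /andP [h1 h2].
  rewrite addnK (_ : minn s k = k); last by lia.
  by rewrite mulnC (addnC k t).
rewrite (@big_distrr _ _ _ _ _ _ (2 ^ s)) /=; apply: eq_big_nat => i /andP [h1 h2].
rewrite (_ : minn s (i - t) = s); last by lia.
by rewrite mulnC.
Qed.


Theorem theorem1 (s d : nat) :
  0 < s -> 0 < d -> ~~ odd d -> s <= d./2 ->
  \sum_(0 <= i < (d./2 - s).+1) 'C(d - s, i)
  + \sum_(1 <= k < s) 2 ^ k * 'C(d - s, d./2 - s + k)
  + 2 ^ s * \sum_(d./2 <= i < (d - s).+1) 'C(d - s, i)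
  <= n (d - s) d.
Proof.
move=> s0 d0 ev hs.
have hd : d = d./2 + d./2.
  by have := odd_double_half d; rewrite (negbTE ev) add0n -addnn.
set t := d./2 - s.
have e2 : d - s = s + (t + t) by rewrite /t; lia.
have e3 : d./2 = s + t by rewrite /t; lia.
have e4 : d = s + (t + t) + s by rewrite /t; lia.
rewrite e2 e3 target_eq //.
clearbody t; rewrite [in X in _ <= X]e4.
have := main_constr s t.
have -> : (\sum_(A : {set 'I_(s + (t + t))}) 2 ^ kk A)
   = \sum_(i < (s + (t + t)).+1) 'C(s + (t + t), i) * 2 ^ (minn s (i - t)).
  by rewrite (sum_card_sets _ (fun i => 2 ^ (minn s (i - t)))) card_ord.
by [].
Qed.
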